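(* Let $n>k$ be positive integers and $\ell$ an integer with $0\le\ell\le k-1$. Then $n_{\ge 0}(G(n,k,\{\ell\}))\le n$.
   Context: For positive integers $n>k$ and $L\subseteq\{0,1,\dots,k-1\}$, the generalized Johnson graph $G(n,k,L)$ has vertex set $\binom{[n]}{k}$, with $A,B$ adjacent if and only if $|A\cap B|\notin L$. A weighted adjacency matrix of a graph $G=(V,E)$ is a Hermitian matrix indexed by $V$ with $A_{ij}\neq0$ only if $ij\in E$. For a Hermitian matrix $X$, $n_{\ge0}(X)$ is its number of nonnegative eigenvalues (with multiplicity), and $n_{\ge0}(G)$ is the minimum of $n_{\ge0}(A)$ over all weighted adjacency matrices $A$ of $G$. *)

(* Defs.v *)
From HB Require Import structures.
From mathcomp Require Import all_boot all_order all_algebra.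
Set Implicit Arguments. Unset Strict Implicit. Unset Printing Implicit Defensive.
Import Order.TTheory GRing.Theory Num.Theory.
Local Open Scope ring_scope.

Definition ksubset (n k : nat) := {A : {set 'I_n} | #|A| == k}.

Definition johnson_adj (n k : nat) (L : pred nat) (A B : ksubset n k) : bool :=
  (A != B) && ~~ L #|val A :&: val B|.

(* Matrices indexed by a finite vertex type V are 'M_#|V|, row/column i
   corresponding to vertex enum_val i. *)
Definition hermitian (C : numClosedFieldType) (m : nat) (X : 'M[C]_m) : Prop :=
  forall i j, X j i = (X i j)^*.

Definition weighted_adjacency (C : numClosedFieldType) (V : finType)
    (adj : rel V) (X : 'M[C]_#|V|) : Prop :=
  hermitian X /\ forall i j, X i j != 0 -> adj (enum_val i) (enum_val j).

Definition eigenvalues (C : numClosedFieldType) (m : nat) (X : 'M[C]_m) : seq C :=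
  sval (closed_field_poly_normal (char_poly X)).

Definition n_ge0 (C : numClosedFieldType) (m : nat) (X : 'M[C]_m) : nat :=
  count (fun z => 0 <= z) (eigenvalues X).

(* Main.v *)
Require Import Defs.
From HB Require Import structures.
From mathcomp Require Import all_boot all_order all_algebra.
From mathcomp Require Import zify.
From mathcomp Require Import sesquilinear spectral.
Import Order.TTheory GRing.Theory Num.Theory.
Local Open Scope ring_scope.
Local Open Scope sesquilinear_scope.

Lemma char_poly_simil (R : comUnitRingType) n (P A : 'M[R]_n) :
  P \in unitmx -> char_poly (invmx P *m A *m P) = char_poly A.
Proof.
move=> Pu; rewrite /char_poly /char_poly_mx.
have -> : 'X%:M - map_mx polyC (invmx P *m A *m P) =
   map_mx polyC (invmx P) *m ('X%:M - map_mx polyC A) *m map_mx polyC P.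
  rewrite mulmxBr mulmxBl !map_mxM; congr (_ - _).
  by rewrite mul_mx_scalar -scalemxAl -map_mxM mulVmx // map_mx1 scalemx1.
rewrite !det_mulmx !det_map_mx mulrC mulrA -rmorphM -det_mulmx mulmxV //.
by rewrite det1 rmorph1 mul1r.
Qed.

Lemma eig_perm (C : numClosedFieldType) m (Y P : 'M[C]_m) (d : 'rV[C]_m) :
  P \in unitmx -> Y = invmx P *m diag_mx d *m P ->
  perm_eq (eigenvalues Y) [seq d 0 i | i <- enum 'I_m].
Proof.
move=> Pu YE; rewrite /eigenvalues; case: closed_field_poly_normal => s /= hs.
apply: prod_XsubC_eq; rewrite -[LHS]scale1r -(monicP (char_poly_monic Y)) -hs.
rewrite YE char_poly_simil // char_poly_trig ?is_diag_mx_is_trig ?diag_mx_is_diag //.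
rewrite big_map big_enum /=; apply: eq_bigr => i _; by rewrite mxE eqxx mulr1n.
Qed.

Lemma form_ge0 (C : numClosedFieldType) p (u : 'rV[C]_p) : 0 <= (u *m u^t*) 0 0.
Proof. by rewrite mxE sumr_ge0 // => i _; rewrite !mxE mul_conjC_ge0. Qed.

Lemma form_gt0 (C : numClosedFieldType) p (u : 'rV[C]_p) : u != 0 -> 0 < (u *m u^t*) 0 0.
Proof. by move=> /dotmx_is_dotmx; rewrite dotmxE. Qed.

Lemma card_count (T : finType) (P : pred T) : #|[set i | P i]| = count P (enum T).
Proof. by rewrite -sum1_card -sum1_count big_enum_cond /=; apply: eq_bigl => i; rewrite inE. Qed.
Lemma key (C : numClosedFieldType) m p (Y : 'M[C]_m) (M : 'M[C]_(m, p)) :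
  Y \is hermsymmx ->
  (forall x : 'rV_m, x != 0 -> x *m M = 0 -> (x *m Y *m x^t*) 0 0 < 0) ->
  (n_ge0 Y <= p)%N.
Proof.
move=> Yh hneg.
have /hermitian_normalmx /orthomx_spectralP YE := Yh.
set P := spectralmx Y in YE; set d := spectral_diag Y in YE.
have Pu : P \is unitarymx := spectral_unitarymx Y.
have /permP hc := @eig_perm _ _ _ _ _ (unitarymx_unit Pu) YE.
rewrite /n_ge0 hc count_map -card_count.
set I := [set i | _].
set s := #|I|.
pose Q : 'M[C]_(s, m) := \matrix_(r, j) ((enum_val r == j)%:R).
have QQt : Q *m Q^T = 1%:M.
  apply/matrixP => r r'; rewrite !mxE (bigD1 (enum_val r)) //= !mxE eqxx mul1r big1 ?addr0.
    by rewrite (inj_eq enum_val_inj) eq_sym.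
  by move=> j /negbTE ne; rewrite !mxE (eq_sym (enum_val r)) ne mul0r.
rewrite leqNgt; apply/negP => ltps.
have hr : (\rank (Q *m P *m M) <= p)%N := rank_leq_col _.
have : kermx (Q *m P *m M) != 0.
  rewrite -mxrank_eq0 mxrank_ker; apply/eqP => h.
  move: h ltps hr; rewrite /s; lia.
move=> K0.
have [i wi] : exists i, row i (kermx (Q *m P *m M)) != 0.
  apply/existsP; apply: contraR K0 => /existsPn h; apply/eqP/row_matrixP => i.
  by rewrite row0; apply/eqP; rewrite (negbNE (h i)).
set w := row i _ in wi.
have wK : w *m (Q *m P *m M) = 0 by apply/sub_kermxP; rewrite row_sub.
set v := w *m Q.
have v0 : v != 0.
  by apply: contraNneq wi => h; rewrite -[w]mulmx1 -QQt mulmxA -/v h mul0mx.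
set x := v *m P.
have x0 : x != 0.
  by apply: contraNneq v0 => h; rewrite -(mulmxtVK v Pu) -/x h mul0mx.
have xM : x *m M = 0 by rewrite /x /v -wK !mulmxA.
have := hneg x x0 xM.
have -> : x *m Y *m x^t* = v *m diag_mx d *m v^t*.
  rewrite YE invmx_unitary // /x trmx_mul map_mxM !mulmxA !mulmxtVK //.
move=> lt; suff: 0 <= (v *m diag_mx d *m v^t*) 0 0 by rewrite lt_geF.
rewrite mul_mx_diag !mxE sumr_ge0 // => j _; rewrite !mxE.
have [dj|dj] := boolP (0 <= d 0 j).
  by rewrite mulrAC mulr_ge0 // mul_conjC_ge0.
suff v0j : \sum_r w 0 r * Q r j = 0 by rewrite v0j !mul0r.
rewrite big1 // => r _; rewrite [Q r j]mxE.
have : enum_val r \in I := enum_valP r.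
rewrite inE; have [e|_] := eqVneq (enum_val r) j; first by rewrite e => /(negP dj).
by rewrite mulr0.
Qed.

Lemma herm_sym (C : numClosedFieldType) m (X : 'M[C]_m) : Defs.hermitian X -> X \is hermsymmx.
Proof.
move=> h; rewrite qualifE /= expr0 scale1r; apply/eqP/matrixP => i j.
by rewrite !mxE h conjCK.
Qed.

Theorem proposition3p4 (C : numClosedFieldType) (n k l : nat) :
  (0 < k)%N -> (k < n)%N -> (l <= k - 1)%N ->
  exists X : 'M[C]_#|{: ksubset n k}|,
    weighted_adjacency (@johnson_adj n k (pred1 l)) X /\ (n_ge0 X <= n)%N.
Proof.
move=> k0 kn lk.
have lk' : (l < k)%N by lia.
pose S (i : 'I_#|{: ksubset n k}|) := val (enum_val i).
have cS i : #|S i| = k by apply/eqP; exact: (valP (enum_val i)).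
pose M : 'M[C]_(_, n) := \matrix_(i, a) ((a \in S i)%:R).
pose Y : 'M[C]_#|{: ksubset n k}| :=
  \matrix_(i, j) (#|S i :&: S j|%:R - l%:R - (i == j)%:R * (k - l)%:R).
have Yh : Defs.hermitian Y.
  move=> i j; rewrite !mxE !rmorphB rmorphM /= !conjC_nat setIC eq_sym.
  by case: (j == i).
exists Y; split; [split => // i j|].
  rewrite mxE /johnson_adj -/(S i) -/(S j) /=.
  have [->|ij] := eqVneq i j.
    by rewrite setIid cS eqxx mul1r natrB 1?ltnW // subrr eqxx.
  rewrite mul0r subr0 (inj_eq enum_val_inj) ij /=.
  by apply: contraNN => /eqP ->; rewrite subrr.
apply: (@key _ _ _ _ M); first exact: herm_sym.
move=> x x0 xM.
pose u1 : 'cV[C]_#|{: ksubset n k}| := const_mx 1.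
have YE : Y = M *m M^T - l%:R *: (u1 *m u1^T) - (k - l)%:R%:M.
  apply/matrixP => i j; rewrite !mxE; congr (_ - _ - _).
  - rewrite (eq_bigr (fun a => ((a \in S i :&: S j) : nat)%:R)); last first.
      by move=> a _; rewrite !mxE inE; case: (a \in S i); case: (a \in S j); rewrite ?mulr1 ?mulr0.
    rewrite -natr_sum -sum1_card big_mkcond /=; congr (_%:R).
  - by rewrite big_ord1 !mxE !mulr1.
  - by rewrite mulr_natl.
have hJ : x *m (l%:R *: (u1 *m u1^T)) *m x^t* = l%:R *: ((x *m u1) *m (x *m u1)^t*).
  rewrite -scalemxAr -scalemxAl; congr (_ *: _).
  have -> : (x *m u1)^t* = u1^T *m x^t*.
    rewrite trmx_mul map_mxM; congr (_ *m _).
    by apply/matrixP => a b; rewrite !mxE rmorph1.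
  by rewrite !mulmxA.
rewrite YE mulmxBr mulmxBl mulmxBr mulmxBl hJ mul_mx_scalar -scalemxAl mulmxA xM !mul0mx !mxE sub0r -opprD oppr_lt0.
apply: ltr_wpDl.
  by apply: mulr_ge0; [exact: ler0n | have := @form_ge0 _ _ (x *m u1); rewrite mxE].
by apply: mulr_gt0; [rewrite ltr0n subn_gt0 | have := @form_gt0 _ _ _ x0; rewrite mxE].
Qed.
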